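(* Let $B_J\in\mathbb R^{n\times n}$ satisfy $B_J\ge O$ elementwise and let $\mathcal B=(B_1,\dots,B_d)$ be a splitting of $B_J$. Assume $\lambda:=\rho(T(\mathcal B))>0$. Then $T(\mathcal B)$ has a nonnegative eigenvector $[\alpha_1^T,\dots,\alpha_d^T]^T$ (with $\alpha_p\in\mathbb R^n$) for the eigenvalue $\lambda$ such that, elementwise, $0\le\lambda\alpha_1\le\alpha_d\le\alpha_{d-1}\le\cdots\le\alpha_2\le\alpha_1$ if $\lambda\le1$, and $0\le\alpha_1\le\alpha_2\le\cdots\le\alpha_{d-1}\le\alpha_d\le\lambda\alpha_1$ if $\lambda\ge1$.
   Context: For $B\in\mathbb R^{n\times n}$, a splitting of $B$ of order $d\ge1$ is an ordered $d$-tuple $\mathcal B=(B_1,\dots,B_d)$ of real $n\times n$ matrices with $B_p\neq O$ for all $p$, $\sum_{p=1}^d B_p=B$, and $B_p\circ B_q=O$ (Hadamard product) for $p\ne q$. The iteration matrix of $\mathcal B$ is the $dn\times dn$ matrix $T(\mathcal B)=(I_{dn}-\mathcal L)^{-1}\mathcal U$, where $\mathcal L,\mathcal U$ are $d\times d$ block matrices with $n\times n$ blocks, $\mathcal L_{ij}=B_j$ if $i>j$ and $O$ otherwise, $\mathcal U_{ij}=B_j$ if $i\le j$ and $O$ otherwise. $\rho$ denotes spectral radius; inequalities between vectors/matrices are elementwise. *)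

(* Defs.v *)
From HB Require Import structures.
From mathcomp Require Import all_boot all_order all_algebra.
From mathcomp Require Import reals.
From mathcomp Require Import complex.
Set Implicit Arguments. Unset Strict Implicit. Unset Printing Implicit Defensive.
Import Order.TTheory GRing.Theory Num.Theory.
Local Open Scope ring_scope.

Definition mx_le (R : realType) (m k : nat) (A B : 'M[R]_(m, k)) : Prop :=
  forall i j, A i j <= B i j.

Definition is_spectral_radius (R : realType) (N : nat) (A : 'M[R]_N) (r : R) : Prop :=
  let p := char_poly (map_mx (fun x : R => (x%:C)%C) A) in
  (exists2 z : R[i], root p z & `|z| = (r%:C)%C) /\
  (forall z : R[i], root p z -> `|z| <= (r%:C)%C).

Definition is_splitting (R : realType) (n d : nat) (B : 'M[R]_n) (Bs : 'I_d -> 'M[R]_n) : Prop :=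
  [/\ (0 < d)%N,
      forall p, Bs p != 0,
      \sum_(p < d) Bs p = B &
      forall p q : 'I_d, p != q -> forall i j, Bs p i j * Bs q i j = 0].

Definition blockL (R : realType) (n d : nat) (Bs : 'I_d -> 'M[R]_n)
  : 'M[R]_(\sum_(p < d) n) :=
  \mxblock_(i < d, j < d) (if (j < i)%N then Bs j else 0).

Definition blockU (R : realType) (n d : nat) (Bs : 'I_d -> 'M[R]_n)
  : 'M[R]_(\sum_(p < d) n) :=
  \mxblock_(i < d, j < d) (if (i <= j)%N then Bs j else 0).

Definition iterT (R : realType) (n d : nat) (Bs : 'I_d -> 'M[R]_n)
  : 'M[R]_(\sum_(p < d) n) :=
  invmx (1%:M - blockL Bs) *m blockU Bs.

(* Main.v *)
Require Import Defs.
From HB Require Import structures.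
From mathcomp Require Import all_boot all_order all_algebra.
From mathcomp Require Import reals complex.
From mathcomp Require Import polyrcf.
From mathcomp Require classical_sets.
From mathcomp Require Import ring lra.
Set Implicit Arguments. Unset Strict Implicit. Unset Printing Implicit Defensive.
Import Order.TTheory GRing.Theory Num.Theory.
Local Open Scope ring_scope.

Lemma char_poly_eval (F : fieldType) n (M : 'M[F]_n) t :
  map_mx (horner_eval t) (char_poly_mx M) = t%:M - M.
Proof.
apply/matrixP => i j; rewrite !mxE /horner_eval.
by rewrite hornerD hornerN hornerMn hornerX hornerC.
Qed.

Lemma char_poly_horner (F : fieldType) n (M : 'M[F]_n) t :
  (char_poly M).[t] = \det (t%:M - M).
Proof. by rewrite -char_poly_eval det_map_mx. Qed.

Lemma root_char_eig (F : fieldType) n (M : 'M[F]_n) t :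
  root (char_poly M) t -> exists2 u : 'cV_n, u != 0 & M *m u = t *: u.
Proof.
rewrite /root char_poly_horner -det_tr => /det0P[v v0 Hv].
exists v^T; first by rewrite trmx_eq0.
apply/eqP; rewrite eq_sym -subr_eq0 -mul_scalar_mx -mulmxBl.
by rewrite -[_ - _]trmxK -trmx_mul Hv trmx0.
Qed.

Lemma eig_root_char (F : fieldType) n (M : 'M[F]_n) t (u : 'cV_n) :
  u != 0 -> M *m u = t *: u -> root (char_poly M) t.
Proof.
move=> u0 Hu; rewrite /root char_poly_horner -det_tr; apply/det0P.
exists u^T; first by rewrite trmx_eq0.
by rewrite -trmx_mul mulmxBl mul_scalar_mx Hu subrr trmx0.
Qed.

Lemma realcM (R : rcfType) (a b : R) : ((a * b)%:C = a%:C * b%:C)%C.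
Proof. exact: (rmorphM (real_complex R)). Qed.
Lemma realc_sum (R : rcfType) n (F : 'I_n -> R) : ((\sum_i F i)%:C = \sum_i (F i)%:C)%C.
Proof. exact: (rmorph_sum (real_complex R)). Qed.

Section PF.
Variables (R : realType) (N : nat) (A : 'M[R]_N).
Hypothesis A_ge0 : forall i j, 0 <= A i j.

Definition nnv (w : 'cV[R]_N) := forall i, 0 <= w i 0.
Definition Sset : classical_sets.set R := fun t =>
  exists w : 'cV[R]_N, [/\ nnv w, w != 0 & forall i, t * w i 0 <= (A *m w) i 0].

Lemma cV_neq0 (w : 'cV[R]_N) : w != 0 -> exists i, w i 0 != 0.
Proof.
move=> w0; case: (boolP [exists i, w i 0 != 0]) => [/existsP[i Hi]|/existsPn H].
  by exists i.
case/eqP: w0; apply/matrixP => i j; rewrite !mxE ord1.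
by move/negPn/eqP: (H i).
Qed.

Lemma cV_max (w : 'cV[R]_N) : nnv w -> w != 0 ->
  exists j, 0 < w j 0 /\ forall k, w k 0 <= w j 0.
Proof.
move=> wge w0; have [i0 Hi0] := cV_neq0 w0.
have [j _ Hj] := @arg_maxP _ _ _ i0 xpredT (fun i => w i 0) isT.
exists j; split; last by move=> k; exact: Hj.
by rewrite (lt_le_trans _ (Hj i0 isT)) // lt_neqAle eq_sym Hi0 wge.
Qed.

Definition KA := \sum_i \sum_k A i k.

Lemma S_bound t : Sset t -> t <= KA.
Proof.
case=> w [wge w0 Hw]; have [j [wj Hj]] := cV_max wge w0.
rewrite -(ler_pM2r wj); apply: le_trans (Hw j) _.
rewrite mxE; apply: (@le_trans _ _ ((\sum_k A j k) * w j 0)).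
  rewrite big_distrl /=; apply: ler_sum => k _.
  by apply: ler_wpM2l.
apply: ler_wpM2r; first exact: ltW.
by rewrite /KA [X in _ <= X](bigD1 j) //= lerDl sumr_ge0 // => i _; rewrite sumr_ge0.
Qed.

Lemma S_down t t' : Sset t -> t' <= t -> Sset t'.
Proof.
case=> w [wge w0 Hw] le; exists w; split => // i.
by apply: le_trans (Hw i); apply: ler_wpM2r.
Qed.

Lemma S_abs (v : 'cV[R]_N) t : v != 0 -> A *m v = t *: v -> Sset t.
Proof.
move=> v0 Hv; exists (map_mx Num.norm v); split.
- by move=> i; rewrite mxE.
- apply/eqP => /matrixP H; have [i Hi] := cV_neq0 v0.
  by move: (H i 0); rewrite !mxE => /eqP; rewrite normr_eq0 (negbTE Hi).
- move=> i; rewrite mxE.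
  apply: (@le_trans _ _ `|(A *m v) i 0|).
    by rewrite Hv !mxE normrM ler_wpM2r // real_ler_norm // num_real.
  rewrite [X in _ <= X]mxE mxE; apply: le_trans (ler_norm_sum _ _ _) _.
  by apply: ler_sum => k _; rewrite normrM ger0_norm // mxE.
Qed.

Lemma S_ne0 : (0 < N)%N -> Sset 0.
Proof.
move=> N0; exists (const_mx 1); split.
- by move=> i; rewrite mxE.
- apply/eqP => /matrixP /(_ (Ordinal N0) 0); rewrite !mxE => /eqP.
  by rewrite oner_eq0.
- move=> i; rewrite mul0r mxE sumr_ge0 // => k _.
  by rewrite mxE mulr1.
Qed.

Lemma S_has_sup : (0 < N)%N -> classical_sets.has_sup Sset.
Proof.
move=> N0; split; first by exists 0; exact: S_ne0.
by exists KA => t; exact: S_bound.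
Qed.

Definition mu := sup Sset.

Lemma S_le_mu t : (0 < N)%N -> Sset t -> t <= mu.
Proof. by move=> N0 St; apply: (sup_upper_bound (S_has_sup N0)). Qed.

Lemma mu_ge0 : (0 < N)%N -> 0 <= mu.
Proof. by move=> N0; apply: S_le_mu => //; exact: S_ne0. Qed.

Lemma notS t : (0 < N)%N -> mu < t -> ~ Sset t.
Proof. by move=> N0 lt St; move: (S_le_mu N0 St); rewrite leNgt lt. Qed.

Lemma resolvent_nn t (x : 'cV[R]_N) : (0 < N)%N -> mu < t ->
  (forall i, 0 <= ((t%:M - A) *m x) i 0) -> nnv x.
Proof.
move=> N0 lt Hy.
have t0 : 0 <= t by apply: le_trans (ltW lt); exact: mu_ge0.
pose w := map_mx (fun a => Num.max 0 (- a)) x.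
have [w0|w0] := eqVneq w 0.
  move=> i; move/matrixP: w0 => /(_ i 0); rewrite !mxE.
  by move/eqP; rewrite eq_le => /andP[+ _]; rewrite ge_max lexx /= oppr_le0.
exfalso; apply: (notS N0 lt); exists w; split => //.
  by move=> i; rewrite mxE le_max lexx.
move=> i; rewrite !mxE.
have Hi := Hy i; rewrite mulmxBl mul_scalar_mx !mxE subr_ge0 in Hi.
rewrite maxr_pMr // mulr0 ge_max; apply/andP; split.
  by apply: sumr_ge0 => k _; rewrite mxE mulr_ge0 // le_max lexx.
apply: (@le_trans _ _ (- (A *m x) i 0)).
  by rewrite mulrN lerN2 mxE.
rewrite mxE -sumrN; apply: ler_sum => k _; rewrite mxE -mulrN.
by apply: ler_wpM2l => //; rewrite le_max lexx orbT.
Qed.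


Lemma cont_right (p : {poly R}) x : (forall t, x < t -> 0 <= p.[t]) -> 0 <= p.[x].
Proof.
move=> H; rewrite leNgt; apply/negP => px.
have e0 : 0 < - p.[x] by rewrite oppr_gt0.
have [d d0 Hd] := poly_cont x p e0.
have : `|(x + d / 2) - x| < d.
  by rewrite addrAC subrr add0r ger0_norm ?ltr_pdivrMr ?ltr_pMr ?ltr1n // ltW // divr_gt0.
move/Hd/ltr_normlW; rewrite ltrBlDr addNr => hy.
have := H (x + d / 2); rewrite leNgt hy ltrDl divr_gt0 //.
by move=> /(_ isT).
Qed.

Definition qA := char_poly A.
Definition FA := \adj (char_poly_mx A).
Definition ev t (X : 'M[{poly R}]_N) := map_mx (horner_eval t) X.

Lemma evCF t : (t%:M - A) *m ev t FA = qA.[t]%:M.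
Proof.
by rewrite -char_poly_eval /ev -map_mxM mul_mx_adj map_scalar_mx.
Qed.

Lemma q_noroot t : (0 < N)%N -> mu < t -> ~~ root qA t.
Proof.
move=> N0 lt; apply/negP => /root_char_eig[u u0 Hu].
by apply: (notS N0 lt); exact: S_abs Hu.
Qed.

Lemma q_pos t : (0 < N)%N -> mu < t -> 0 < qA.[t].
Proof.
move=> N0 lt.
have H : {in `[t, +oo[, forall x0 : R, ~~ root qA x0}.
  move=> y; rewrite in_itv /= andbT => ty; apply: q_noroot => //.
  exact: lt_le_trans ty.
have := sgp_pinftyP H; move=> /(_ t); rewrite in_itv /= lexx => /(_ isT).
rewrite /sgp_pinfty (monicP (char_poly_monic A)) sgr1 => /eqP.
by rewrite sgr_cp0.
Qed.

Lemma F_nn t : (0 < N)%N -> mu < t -> forall i j, 0 <= (FA i j).[t].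
Proof.
move=> N0 lt i j.
have := @resolvent_nn t (col j (ev t FA)) N0 lt.
move=> /(_ _ i); rewrite !mxE; apply => k.
rewrite colE mulmxA evCF -colE !mxE.
by case: (k == j); rewrite ?mulr1n ?mulr0n // ltW // q_pos.
Qed.


Lemma PF_exists : (0 < N)%N ->
  exists h : 'cV[R]_N, [/\ nnv h, h != 0 & A *m h = mu *: h].
Proof.
move=> N0.
set P : {poly R} := 'X - mu%:P.
have FA0 : exists ij : 'I_N * 'I_N, FA ij.1 ij.2 != 0.
  case: (boolP [exists ij : 'I_N * 'I_N, FA ij.1 ij.2 != 0]).
    by move/existsP.
  move/existsPn => H; exfalso.
  have lt : mu < mu + 1 by rewrite ltrDl.
  have := evCF (mu + 1); have -> : ev (mu + 1) FA = 0.
    apply/matrixP => i j; rewrite /ev [LHS]mxE [RHS]mxE.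
    by move/negPn/eqP: (H (i, j)) => /= ->; rewrite horner_evalE horner0.
  rewrite mulmx0 => /matrixP /(_ (Ordinal N0) (Ordinal N0)); rewrite !mxE eqxx mulr1n.
  by move=> /esym /eqP; rewrite (gt_eqF (q_pos N0 lt)).
case: FA0 => ij0 Hij0.
have [m Hmm Hmin] := @arg_minnP _ ij0 (fun ij => FA ij.1 ij.2 != 0)
   (fun ij => mup mu (FA ij.1 ij.2)) Hij0.
set k := mup mu (FA m.1 m.2) in Hmin.
have Hdiv : forall i j, P ^+ k %| FA i j.
  move=> i j; case: (eqVneq (FA i j) 0) => [->|nz]; first by rewrite dvdp0.
  by rewrite -mup_geq //; exact: (Hmin (i, j)).
have Hndiv : ~~ (P ^+ k.+1 %| FA m.1 m.2) by rewrite -mup_leq.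
pose HH := map_mx (fun p => p %/ P ^+ k) FA.
have HF : forall i j, FA i j = HH i j * P ^+ k.
  by move=> i j; rewrite /HH [in RHS]mxE divpK.
have Pk0 : P ^+ k != 0 by rewrite expf_neq0 // polyXsubC_eq0.
have Hm0 : ~~ root (HH m.1 m.2) mu.
  apply: contra Hndiv; rewrite -dvdp_XsubCl => Hd.
  by rewrite HF exprSr mulrC dvdp_mul.
pose G := char_poly_mx A *m HH.
have HG : forall i j, G i j * P ^+ k = qA * (i == j)%:R.
  move=> i j.
  have E : (char_poly_mx A *m FA) i j = qA *+ (i == j) by rewrite /FA mul_mx_adj mxE.
  rewrite mulr_natr -E /G [X in X * _ = _]mxE [in RHS]mxE big_distrl /=.
  by apply: eq_bigr => l _; rewrite -mulrA -HF.
set g := G m.2 m.2.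
have Hq : qA = g * P ^+ k by rewrite mulrC; have := HG m.2 m.2; rewrite eqxx mulr1 mulrC.
have HGg : forall i j, G i j = g * (i == j)%:R.
  move=> i j; apply: (mulIf Pk0); rewrite HG.
  by case: (i == j); rewrite ?mulr1 ?mulr0 ?mul0r // Hq.
have Hev : (mu%:M - A) *m ev mu HH = g.[mu]%:M.
  rewrite -char_poly_eval /ev -map_mxM -/G; change (ev mu G = g.[mu]%:M); apply/matrixP => i j.
  rewrite /ev [LHS]mxE [RHS]mxE HGg horner_evalE; case: (i == j);
    by rewrite ?mulr1 ?mulr0 ?mulr1n ?mulr0n ?horner0.
have Pkt : forall t, (P ^+ k).[t] = (t - mu) ^+ k.
  by move=> t; rewrite horner_exp hornerXsubC.
have HH_nn : forall i j, 0 <= (HH i j).[mu].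
  move=> i j; apply: cont_right => t lt.
  have := F_nn N0 lt i j; rewrite HF hornerM Pkt pmulr_lge0 //.
  by rewrite exprn_gt0 // subr_gt0.
have g_nn : 0 <= g.[mu].
  apply: cont_right => t lt.
  have := q_pos N0 lt; rewrite Hq hornerM Pkt => /ltW.
  by rewrite pmulr_lge0 // exprn_gt0 // subr_gt0.
case: (eqVneq g.[mu] 0) => [g0|gn0].
  exists (col m.2 (ev mu HH)); split.
  - by move=> i; rewrite mxE /ev mxE horner_evalE; exact: HH_nn.
  - apply/eqP => /matrixP /(_ m.1 0); rewrite mxE /ev [X in X = _]mxE [X in _ = X]mxE horner_evalE => /eqP.
    by move=> H0; move: Hm0; rewrite /root H0.
  - apply/eqP; rewrite eq_sym -subr_eq0 -mul_scalar_mx -mulmxBl colE mulmxA Hev g0.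
    by rewrite mul_scalar_mx scale0r.
exfalso.
have gp : 0 < g.[mu] by rewrite lt_neqAle eq_sym gn0.
set Hm := ev mu HH.
have HmL : Hm *m (mu%:M - A) = g.[mu]%:M.
  have : (mu%:M - A) *m ((g.[mu])^-1 *: Hm) = 1%:M.
    by rewrite -scalemxAr Hev scale_scalar_mx mulVf.
  move/mulmx1C; rewrite -scalemxAl => /(congr1 (fun X => g.[mu] *: X)).
  by rewrite scalerA mulfV // scale1r => ->; rewrite scale_scalar_mx mulr1.
have Hm_nn : forall i j, 0 <= Hm i j by move=> i j; rewrite mxE horner_evalE.
pose KH := \sum_i \sum_l Hm i l.
have KH0 : 0 <= KH by apply: sumr_ge0 => i _; apply: sumr_ge0.
have key : forall t', Sset t' -> g.[mu] <= (mu - t') * KH.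
  move=> t' St'; have t'mu := S_le_mu N0 St'.
  case: St' => w [wge w0 Hw]; have [j [wj Hj]] := cV_max wge w0.
  rewrite -(ler_pM2r wj).
  have -> : g.[mu] * w j 0 = ((Hm *m (mu%:M - A)) *m w) j 0.
    by rewrite HmL mul_scalar_mx !mxE.
  rewrite -mulmxA mxE.
  apply: (@le_trans _ _ (\sum_l Hm j l * ((mu - t') * w j 0))).
    apply: ler_sum => l _; apply: ler_wpM2l => //.
    rewrite mulmxBl mul_scalar_mx !mxE.
    have := Hw l; rewrite mxE => Hwl.
    apply: (@le_trans _ _ ((mu - t') * w l 0)).
      by rewrite mulrBl lerB.
    by apply: ler_wpM2l; rewrite ?subr_ge0.
  rewrite -big_distrl /= mulrA [_ * (mu - t')]mulrC; apply: ler_wpM2r; first exact: ltW.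
  apply: ler_wpM2l; first by rewrite subr_ge0.
  by rewrite /KH [X in _ <= X](bigD1 j) //= lerDl sumr_ge0 // => i _; rewrite sumr_ge0.
have KH1 : 0 < KH + 1 by rewrite ltr_wpDl.
have eps0 : 0 < g.[mu] / (KH + 1) by rewrite divr_gt0.
have [t' St' Ht'] := sup_adherent eps0 (S_has_sup N0).
have := key t' St'.
apply/negP; rewrite -ltNge.
apply: (@le_lt_trans _ _ (g.[mu] / (KH + 1) * KH)).
  apply: ler_wpM2r => //; rewrite -/mu in Ht'.
  by rewrite lerBlDl -lerBlDr ltW.
rewrite mulrAC ltr_pdivrMr // ltr_pM2l //.
by rewrite ltrDl.
Qed.


Lemma normcR (c : R[i]) : `|c| = ((complex.Re `|c|)%:C)%C.
Proof. by rewrite normc_def. Qed.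

Lemma PF_spectral (rho : R) : is_spectral_radius A rho ->
  exists h : 'cV[R]_N, [/\ nnv h, h != 0 & A *m h = rho *: h].
Proof.
case=> [[z rz nz] Hall].
pose Ac := map_mx (real_complex R) A.
have [u u0 Hu] := @root_char_eig _ _ Ac z rz.
have [i0 Hi0] : exists i, u i 0 != 0.
  case: (boolP [exists i, u i 0 != 0]) => [/existsP[i Hi]|/existsPn H].
    by exists i.
  by case/eqP: u0; apply/matrixP => i j; rewrite !mxE ord1; move/negPn/eqP: (H i).
have N0 : (0 < N)%N by apply: leq_ltn_trans (ltn_ord i0).
have Srho : Sset rho.
  exists (map_mx (fun c => complex.Re `|c|) u); split.
  - by move=> i; rewrite mxE -ler0c -normcR.
  - apply/eqP => /matrixP /(_ i0 0); rewrite !mxE => H0.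
    by move: Hi0; rewrite -normr_eq0 normcR H0 eqxx.
  - move=> i; rewrite [X in _ <= X]mxE -lecR realcM realc_sum.
    rewrite mxE -normcR -nz -normrM.
    have -> : (z * u i 0) = (Ac *m u) i 0 by rewrite Hu mxE.
    rewrite mxE; apply: le_trans (ler_norm_sum _ _ _) _.
    apply: ler_sum => k _; rewrite normrM mxE realcM mxE.
    by rewrite -normcR ger0_norm // ler0c.
have rho_mu := S_le_mu N0 Srho.
have [h [hnn h0 Hh]] := PF_exists N0.
have rmu : root (char_poly Ac) ((mu%:C)%C).
  by rewrite -map_char_poly; apply: rmorph_root; exact: eig_root_char Hh.
have := Hall _ rmu; rewrite ger0_norm ?ler0c ?mu_ge0 // lecR => mu_rho.
exists h; split => //.
by have -> : rho = mu by apply/eqP; rewrite eq_le rho_mu mu_rho.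
Qed.

End PF.

Section Blocks.
Variables (R : realType) (n d : nat) (Bs : 'I_d -> 'M[R]_n).
Notation D := (\sum_(p < d) n)%N.

Definition SL (a : 'I_d -> 'cV[R]_n) (i : 'I_d) :=
  \sum_(j < d) ((if (j < i)%N then Bs j else 0) *m a j).
Definition SU (a : 'I_d -> 'cV[R]_n) (i : 'I_d) :=
  \sum_(j < d) ((if (i <= j)%N then Bs j else 0) *m a j).

Lemma blockL_col (a : 'I_d -> 'cV[R]_n) :
  blockL Bs *m \mxcol_p a p = \mxcol_i SL a i.
Proof. by rewrite /blockL mul_mxblock_mxrow. Qed.

Lemma blockU_col (a : 'I_d -> 'cV[R]_n) :
  blockU Bs *m \mxcol_p a p = \mxcol_i SU a i.
Proof. by rewrite /blockU mul_mxblock_mxrow. Qed.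

Lemma submxcolZ (c : R) (X : 'cV[R]_D) i :
  submxcol (c *: X) i = c *: submxcol X i.
Proof. by apply/matrixP => k l; rewrite !mxE. Qed.

Lemma SLU a i : SL a i + SU a i = \sum_j Bs j *m a j.
Proof.
rewrite /SL /SU -big_split /=; apply: eq_bigr => j _.
by rewrite -mulmxDl; case: ltnP => //= _; rewrite ?addr0 ?add0r.
Qed.


Hypothesis Bnn : forall p i j, 0 <= Bs p i j.
Definition nnc m (w : 'cV[R]_m) := forall i, 0 <= w i 0.

Lemma fwd_eq (z y : 'cV[R]_D) : (1%:M - blockL Bs) *m z = y ->
  forall i, submxcol z i = submxcol y i + SL (submxcol z) i.
Proof.
move=> H i; rewrite -H mulmxBl mul1mx -{2 3}(submxcolK z) blockL_col.
by rewrite submxcolB !mxcolK subrK.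
Qed.

Lemma SL_nn (a : 'I_d -> 'cV[R]_n) (i : 'I_d) : (forall j : 'I_d, (j < i)%N -> nnc (a j)) ->
  nnc (SL a i).
Proof.
move=> H k; rewrite /SL summxE sumr_ge0 // => j _.
case: ifP => ji; last by rewrite mul0mx mxE.
by rewrite mxE sumr_ge0 // => l _; rewrite mulr_ge0 // H.
Qed.

Lemma SL_0 (a : 'I_d -> 'cV[R]_n) (i : 'I_d) : (forall j : 'I_d, (j < i)%N -> a j = 0) ->
  SL a i = 0.
Proof.
move=> H; rewrite /SL big1 // => j _.
by case: ifP => ji; rewrite ?mul0mx // H // mulmx0.
Qed.

Lemma nnc_blocks (z : 'cV[R]_D) : nnc z <-> forall i, nnc (submxcol z i).
Proof.
split=> [H i k|H s]; first by rewrite mxE.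
by rewrite -(submxcolK z) mxE; apply: H.
Qed.

Lemma fwd_nn (z y : 'cV[R]_D) : (1%:M - blockL Bs) *m z = y -> nnc y -> nnc z.
Proof.
move=> H ynn; apply/nnc_blocks.
suff: forall m (i : 'I_d), (i < m)%N -> nnc (submxcol z i) by move=> /(_ d) Hm i; apply: Hm.
elim=> [//|m IH] i; rewrite ltnS => im.
rewrite (fwd_eq H) => k; rewrite mxE addr_ge0 //.
  by move/nnc_blocks: ynn; apply.
apply: SL_nn => j ji; apply: IH; exact: leq_trans ji im.
Qed.

Lemma fwd_0 (z : 'cV[R]_D) : (1%:M - blockL Bs) *m z = 0 -> z = 0.
Proof.
move=> H.
suff Hz : forall i, submxcol z i = 0.
  by rewrite -(submxcolK z) (eq_mxcol Hz) mxcol0.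
suff: forall m (i : 'I_d), (i < m)%N -> submxcol z i = 0 by move=> Hm i; apply: Hm.
elim=> [//|m IH] i; rewrite ltnS => im.
rewrite (fwd_eq H) SL_0 ?addr0; first by apply/matrixP => k l; rewrite !mxE.
by move=> j ji; apply: IH; exact: leq_trans ji im.
Qed.

Lemma M_unit : (1%:M - blockL Bs) \in unitmx.
Proof.
rewrite unitmxE unitfE -det_tr; apply/negP => /det0P[v v0 Hv].
case/eqP: v0; rewrite -[v]trmxK; apply/eqP; rewrite trmx_eq0; apply/eqP.
by apply: fwd_0; rewrite -[LHS]trmxK trmx_mul trmxK Hv trmx0.
Qed.


Lemma T_nn : forall s t, 0 <= iterT Bs s t.
Proof.
move=> s t.
have -> : iterT Bs s t = col t (iterT Bs) s 0 by rewrite [RHS]mxE.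
apply: (@fwd_nn _ (col t (blockU Bs))).
  by rewrite /iterT !colE mulmxA mulKVmx // M_unit.
move=> k; rewrite !mxE; case: ifP => _; by rewrite ?mxE.
Qed.

Lemma SL_first (a : 'I_d -> 'cV[R]_n) (i : 'I_d) : val i = 0%N -> SL a i = 0.
Proof. by move=> i0; apply: SL_0 => j; rewrite i0. Qed.

Lemma SL_succ (a : 'I_d -> 'cV[R]_n) (p q : 'I_d) : val q = (val p).+1 ->
  SL a q = SL a p + Bs p *m a p.
Proof.
move=> hq; rewrite /SL [in LHS](bigD1 p) //= [in RHS](bigD1 p) //= hq ltnSn ltnn.
rewrite mul0mx add0r addrC; congr (_ + _); apply: eq_bigr => j jp.
by rewrite ltnS leq_eqVlt -[val j == val p]/(j == p) (negbTE jp).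
Qed.

Lemma SU_last (a : 'I_d -> 'cV[R]_n) (l : 'I_d) : val l = d.-1 ->
  SU a l = Bs l *m a l.
Proof.
move=> hl; rewrite /SU (bigD1 l) //= leqnn big1 ?addr0 // => j jl.
case: ifP => [lj|_]; last by rewrite mul0mx.
exfalso; move/negP: jl; apply.
have d0 : (0 < d)%N by apply: leq_ltn_trans (ltn_ord l).
rewrite -[j == l]/(val j == val l) eqn_leq lj andbT hl -ltnS prednK //; exact: ltn_ord.
Qed.

End Blocks.

Unset Implicit Arguments. Set Strict Implicit. Set Printing Implicit Defensive.

Lemma Bs_nn (R : realType) (n d : nat) (BJ : 'M[R]_n) (Bs : 'I_d -> 'M[R]_n) :
  mx_le 0 BJ -> is_splitting BJ Bs -> forall p i j, 0 <= Bs p i j.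
Proof.
move=> HB [_ _ Hsum Hdisj] p i j.
case: (eqVneq (Bs p i j) 0) => [->//|nz].
have <- : BJ i j = Bs p i j.
  rewrite -Hsum summxE (bigD1 p) //= big1 ?addr0 // => q qp.
  have := Hdisj p q; rewrite eq_sym qp => /(_ isT i j) /eqP.
  by rewrite mulf_eq0 (negbTE nz) => /eqP.
by have := HB i j; rewrite mxE.
Qed.

Theorem lemma3p1 (R : realType) (n d : nat) (BJ : 'M[R]_n)
  (Bs : 'I_d -> 'M[R]_n) (lambda : R) :
  mx_le 0 BJ ->
  is_splitting BJ Bs ->
  is_spectral_radius (iterT Bs) lambda ->
  0 < lambda ->
  exists alpha : 'I_d -> 'cV[R]_n,
    let x := \mxcol_(p < d) alpha p in
    [/\ x != 0,
        mx_le 0 x,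
        iterT Bs *m x = lambda *: x,
        lambda <= 1 ->
          [/\ forall p : 'I_d, mx_le 0 (lambda *: alpha p),
              forall p q : 'I_d, val p = 0%N -> val q = d.-1 ->
                mx_le (lambda *: alpha p) (alpha q) &
              forall p q : 'I_d, val q = (val p).+1 -> mx_le (alpha q) (alpha p)] &
        1 <= lambda ->
          [/\ forall p : 'I_d, mx_le 0 (alpha p),
              forall p q : 'I_d, val p = 0%N -> val q = d.-1 ->
                mx_le (alpha q) (lambda *: alpha p) &
              forall p q : 'I_d, val q = (val p).+1 -> mx_le (alpha p) (alpha q)]].
Proof.
move=> HBJ Hsp Hrho lam0.
have Bnn := @Bs_nn _ _ _ _ _ HBJ Hsp.
have [h [hnn h0 Hh]] := PF_spectral (T_nn Bnn) Hrho.
pose a : 'I_d -> 'cV[R]_n := fun p => submxcol h p.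
exists a; cbv zeta; rewrite submxcolK.
have ann : forall p k, 0 <= a p k 0 by move=> p k; rewrite mxE.
have HU : blockU Bs *m h = lambda *: ((1%:M - blockL Bs) *m h).
  have := congr1 (mulmx (1%:M - blockL Bs)) Hh.
  by rewrite /iterT mulmxA mulKVmx ?M_unit // -scalemxAr.
have HE : forall i, SU Bs a i = lambda *: (a i - SL Bs a i).
  move=> i; have := congr1 (fun X => submxcol X i) HU.
  rewrite -{1 2}(submxcolK h) blockU_col mulmxBl mul1mx blockL_col.
  by rewrite mxcolK submxcolZ submxcolB !mxcolK.
pose S := \sum_(j < d) Bs j *m a j.
have e_E : forall i k, lambda * a i k 0 = S k 0 - SL Bs a i k 0 + lambda * SL Bs a i k 0.
  move=> i k; have := congr1 (fun X : 'cV[R]_n => X k 0) (HE i).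
  have := congr1 (fun X : 'cV[R]_n => X k 0) (SLU Bs a i).
  rewrite !mxE => <- ->; ring.
have bnn : forall p k, 0 <= (Bs p *m a p) k 0.
  by move=> p k; rewrite mxE sumr_ge0 // => l _; rewrite mulr_ge0.
have Dcons : forall p q k, val q = (val p).+1 ->
    lambda * (a p k 0 - a q k 0) = (1 - lambda) * (Bs p *m a p) k 0.
  move=> p q k hq; have Ep := e_E p k; have Eq := e_E q k.
  have := congr1 (fun X : 'cV[R]_n => X k 0) (SL_succ Bs a hq); rewrite mxE => Hl.
  rewrite Hl in Eq; lra.
have Dlast : forall p q k, val p = 0%N -> val q = d.-1 ->
    lambda * (a q k 0 - lambda * a p k 0) = (1 - lambda) * (Bs q *m a q) k 0.
  move=> p q k hp hq; have Ep := e_E p k; have Eq := e_E q k.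
  rewrite (SL_first Bs a hp) in Ep.
  have := congr1 (fun X : 'cV[R]_n => X k 0) (SLU Bs a q); rewrite SU_last // mxE => Hl.
  have Ep2 : lambda * a p k 0 = S k 0 by rewrite Ep [(0 : 'cV[R]_n) k 0]mxE subr0 mulr0 addr0.
  by rewrite mulrBr Eq mulrCA Ep2 /S -Hl; ring.
split => //; rewrite /mx_le.
- by move=> i j; rewrite mxE ord1; apply: hnn.
- move=> le1; split.
  + by move=> p i j; rewrite [X in _ <= X]mxE mxE ord1 mulr_ge0 // ltW.
  + move=> p q hp hq i j; rewrite mxE ord1.
    have := Dlast p q i hp hq; have := bnn q i; nra.
  + move=> p q hq i j; rewrite ord1.
    have := Dcons p q i hq; have := bnn p i; nra.
- move=> ge1; split.
  + by move=> p i j; rewrite mxE ord1.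
  + move=> p q hp hq i j; rewrite [X in _ <= X]mxE ord1.
    have := Dlast p q i hp hq; have := bnn q i; nra.
  + move=> p q hq i j; rewrite ord1.
    have := Dcons p q i hq; have := bnn p i; nra.
Qed.
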